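(* Fix $\Delta>1$. Consider a matrix $M\in\mathbb{F}_2^{m\times n}$ that can be used for $\Delta$-approximation of $d=\|\mathbf{x}\|_0$ in the group testing model with only the trivial upper bound $D=n$ on $d$ (i.e. for all $\mathbf{x}\in\mathbb{F}_2^n$). Then for large $n$ it is necessary that $$m\ge n\left(h\!\left(\frac{1}{\Delta^4}\right)-\frac{1}{\Delta^2}h\!\left(\frac{1}{\Delta^2}\right)\right)=\Omega(n),$$ where $h$ is the binary entropy function.
   Context: $\|\mathbf{x}\|_0$ is the number of nonzero entries of $\mathbf{x}$. Group testing model: $(M\odot\mathbf{x})_i=\bigvee_{j:M_{ij}=1}\mathbf{x}_j$. $M$ can be used for $\Delta$-approximation if some deterministic decoder, given only $M\odot\mathbf{x}$, outputs $\hat d$ with $\frac1\Delta\le\hat d/d\le\Delta$ for every admissible $\mathbf{x}$. $h(x)=-x\log_2 x-(1-x)\log_2(1-x)$. *)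

(* Defs.v *)
From mathcomp Require Import all_boot all_algebra.
From Stdlib Require Import Reals.

Set Implicit Arguments.
Unset Strict Implicit.
Unset Printing Implicit Defensive.

(* F_2 is represented by bool (1 = true). A test matrix M in F_2^{m x n}. *)

Definition weight (n : nat) (x : 'rV[bool]_n) : nat :=
  #|[set j : 'I_n | x ord0 j]|.

Definition gt_outcome (m n : nat) (M : 'M[bool]_(m, n)) (x : 'rV[bool]_n)
  : {ffun 'I_m -> bool} :=
  [ffun i => [exists j : 'I_n, M i j && x ord0 j]].

Local Open Scope R_scope.

Definition log2 (x : R) : R := ln x / ln 2.

Definition h (x : R) : R := - x * log2 x - (1 - x) * log2 (1 - x).

(* M can be used for Delta-approximation of d = ||x||_0 with the trivial
   upper bound D = n: some deterministic decoder, seeing only M (.) x,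
   outputs dhat with 1/Delta <= dhat/d <= Delta for every nonzero x. *)
Definition approx_usable (Delta : R) (m n : nat) (M : 'M[bool]_(m, n)) : Prop :=
  exists dec : {ffun 'I_m -> bool} -> R,
    forall x : 'rV[bool]_n, (0 < weight x)%nat ->
      1 / Delta <= dec (gt_outcome M x) / INR (weight x) <= Delta.

(* Main.v *)
Require Import Defs.
From mathcomp Require Import all_boot all_algebra.
From Stdlib Require Import Reals.
From mathcomp Require Import Rstruct.
From mathcomp Require Import lra ring.
Import mathcomp.order.order.Order.TTheory GRing.Theory Num.Theory.
Set Implicit Arguments.
Unset Strict Implicit.
Local Open Scope ring_scope.

Lemma sum_prod n (F : 'I_n -> bool -> R) :
  \sum_(x : 'rV[bool]_n) \prod_(j < n) F j (x ord0 j) = \prod_(j < n) (F j true + F j false).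
Proof.
have -> : \prod_(j < n) (F j true + F j false) = \prod_(j < n) \sum_(b : bool) F j b.
  by apply: eq_bigr => j _; rewrite big_bool.
rewrite bigA_distr_bigA /=.
rewrite (reindex (fun f : {ffun 'I_n -> bool} => \row_j f j)) /=.
  by apply: eq_bigr => f _; apply: eq_bigr => j _; rewrite mxE.
exists (fun x : 'rV[bool]_n => [ffun j => x ord0 j]) => [f _ | x _].
  by apply/ffunP => j; rewrite ffunE mxE.
by apply/rowP => j; rewrite mxE ffunE.
Qed.

Lemma ln_prod n (f : 'I_n -> R) : (forall j, 0 < f j) ->
  0 < \prod_(j < n) f j /\ ln (\prod_(j < n) f j) = \sum_(j < n) ln (f j).
Proof.
move=> fpos; apply: (big_rec2 (fun a b => 0 < a /\ ln a = b)).
  by split; [exact: ltr01 | exact: ln_1].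
move=> j a b _ [Ha Hb]; split; first exact: mulr_gt0.
by rewrite -RmultE ln_mult ?Hb //; apply/RltP.
Qed.

Lemma ln_le_sub1 t : 0 < t -> ln t <= t - 1.
Proof.
move=> /RltP t0; have := exp_ineq1_le (ln t); rewrite exp_ln //.
move=> /RleP; rewrite RplusE R1E; lra.
Qed.

Lemma gibbs (I : finType) (p g : I -> R) : (forall i, 0 < p i) -> (forall i, 0 < g i) ->
  \sum_i p i = 1 -> \sum_i g i <= 1 ->
  \sum_i p i * (- ln (p i)) <= \sum_i p i * (- ln (g i)).
Proof.
move=> pp gp sp sg; rewrite -subr_ge0 -sumrB.
have : \sum_i (p i - g i) >= 0 by rewrite sumrB sp; lra.
move=> H; apply: le_trans H _; apply: ler_sum => i _.
have q0 : 0 < g i / p i by apply: divr_gt0.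
have := ln_le_sub1 q0.
rewrite -RdivE /Rdiv ln_mult ?ln_Rinv; try by apply/RltP.
  2: by apply/RltP; rewrite RinvE invr_gt0.
rewrite RplusE RoppE => H.
have pi := pp i.
have H2 : p i * (ln (g i) - ln (p i)) <= p i * (g i / p i - 1) by rewrite ler_pM2l.
move: H2; rewrite [p i * (_ / _ - 1)]mulrBr mulr1 mulrCA divff ?mulr1; last by rewrite gt_eqF.
lra.
Qed.
Definition pB (a : R) n (x : 'rV[bool]_n) :=
  \prod_(j < n) (if x ord0 j then a else 1 - a).
Definition ind (b : bool) : R := if b then @GRing.one R else @GRing.zero R.

Lemma E2 a n (H : 'I_n -> bool -> R) :
  \sum_(x : 'rV[bool]_n) pB a x * \prod_(j < n) H j (x ord0 j) =
  \prod_(j < n) (a * H j true + (1 - a) * H j false).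
Proof.
rewrite -(sum_prod (fun j b => (if b then a else 1 - a) * H j b)).
by apply: eq_bigr => x _; rewrite /pB -big_split.
Qed.

Lemma pB_sum a n : \sum_(x : 'rV[bool]_n) pB a x = 1.
Proof.
have E := E2 a (fun (_ : 'I_n) (_ : bool) => 1); rewrite /= in E.
have E' : \prod_(j < n) (a * 1 + (1 - a) * 1) = 1 :> R.
  by rewrite big1 // => j _; rewrite !mulr1 addrC subrK.
rewrite E' in E; rewrite -E; apply: eq_bigr => x _; rewrite big1 ?mulr1 //.
Qed.

Lemma E1 a n (phi : 'I_n -> bool -> R) :
  \sum_(x : 'rV[bool]_n) pB a x * \sum_(j < n) phi j (x ord0 j) =
  \sum_(j < n) (a * phi j true + (1 - a) * phi j false).
Proof.
under eq_bigr do rewrite mulr_sumr.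
rewrite exchange_big /=; apply: eq_bigr => j _.
have E := E2 a (fun k b => if k == j then phi j b else 1); rewrite /= in E.
have E' : \prod_(k < n) (a * (if k == j then phi j true else 1) +
           (1 - a) * (if k == j then phi j false else 1)) = a * phi j true + (1 - a) * phi j false.
  rewrite (bigD1 j) //= !eqxx big1 ?mulr1 // => k /negbTE ->.
  by rewrite !mulr1 addrC subrK.
rewrite E' in E; rewrite -E; apply: eq_bigr => x _.
by rewrite (bigD1 j) //= eqxx big1 ?mulr1 // => k /negbTE ->.
Qed.

Lemma cardR n (A : {set 'I_n}) : (#|A|)%:R = \sum_(j < n) ind (j \in A) :> R.
Proof.
by rewrite -sumr_const big_mkcond.
Qed.

Lemma weightR n (x : 'rV[bool]_n) : (weight x)%:R = \sum_(j < n) ind (x ord0 j) :> R.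
Proof.
by rewrite /weight cardR; apply: eq_bigr => j _; rewrite inE.
Qed.

Definition GU n (b : R) (U x : 'rV[bool]_n) :=
  \prod_(j < n) (if U ord0 j then (if x ord0 j then b else 1 - b)
                 else (if x ord0 j then 0 else 1)).

Lemma GU_sum n b (U : 'rV[bool]_n) : \sum_x GU b U x = 1.
Proof.
rewrite /GU (sum_prod (fun j c => if U ord0 j then (if c then b else 1 - b)
                 else (if c then 0 else 1))) big1 // => j _.
by case: (U ord0 j); rewrite ?add0r // addrC subrK.
Qed.

Lemma GU_ln n b (U x : 'rV[bool]_n) : 0 < b < 1 -> (forall j, x ord0 j -> U ord0 j) ->
  0 < GU b U x /\ - ln (GU b U x) =
  \sum_(j < n) (ind (x ord0 j) * (- ln b - - ln (1 - b)) + (- ln (1 - b)) * ind (U ord0 j)).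
Proof.
move=> /andP [b0 b1] sub.
have [] := @ln_prod n (fun j => if U ord0 j then (if x ord0 j then b else 1 - b)
                 else (if x ord0 j then 0 else 1)).
  move=> j; case: (boolP (U ord0 j)) => Uj; case: (boolP (x ord0 j)) => xj //; try lra.
  by move: Uj; rewrite (sub _ xj).
move=> gp ->; split => //; rewrite -sumrN; apply: eq_bigr => j _.
case: (boolP (U ord0 j)) => Uj; case: (boolP (x ord0 j)) => xj /=; rewrite /ind.
- by rewrite mul1r mulr1 subrK.
- by rewrite mul0r add0r mulr1.
- by move: Uj; rewrite (sub _ xj).
- by rewrite mul0r mulr0 add0r ln_1 oppr0.
Qed.
Definition Uv m n (M : 'M[bool]_(m, n)) (y : {ffun 'I_m -> bool}) : 'rV[bool]_n :=
  \row_j [exists x : 'rV[bool]_n, (gt_outcome M x == y) && x ord0 j].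

Lemma Uv_out m n (M : 'M[bool]_(m, n)) (x : 'rV[bool]_n) :
  gt_outcome M (Uv M (gt_outcome M x)) = gt_outcome M x.
Proof.
apply/ffunP => i; rewrite !ffunE; apply/idP/idP.
  case/existsP => j; rewrite mxE => /andP [Mij /existsP [x' /andP [/eqP e x'j]]].
  by move: e => /ffunP /(_ i); rewrite !ffunE => <-; apply/existsP; exists j; rewrite Mij.
case/existsP => j /andP [Mij xj]; apply/existsP; exists j; rewrite Mij mxE /=.
by apply/existsP; exists x; rewrite eqxx.
Qed.

Lemma Uv_sub m n (M : 'M[bool]_(m, n)) (x : 'rV[bool]_n) (j : 'I_n) : x ord0 j -> Uv M (gt_outcome M x) ord0 j.
Proof. by move=> xj; rewrite mxE; apply/existsP; exists x; rewrite eqxx. Qed.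

Definition Zs m n (M : 'M[bool]_(m, n)) : {set 'I_n} := [set j | [forall i, ~~ M i j]].

Definition xZ m n (M : 'M[bool]_(m, n)) (x : 'rV[bool]_n) : 'rV[bool]_n :=
  \row_j (x ord0 j && (j \notin Zs M)).

Lemma out_xZ m n (M : 'M[bool]_(m, n)) (x : 'rV[bool]_n) : gt_outcome M (xZ M x) = gt_outcome M x.
Proof.
apply/ffunP => i; rewrite !ffunE; apply/existsP/existsP => [[j]|[j]].
  by rewrite mxE => /andP [Mij /andP [xj _]]; exists j; rewrite Mij.
move=> /andP [Mij xj]; exists j; rewrite mxE Mij xj /= inE.
by apply/forallP => /(_ i); rewrite Mij.
Qed.

Lemma Uv_Z m n (M : 'M[bool]_(m, n)) (x : 'rV[bool]_n) : (forall j, x ord0 j -> j \in Zs M) ->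
  forall j, Uv M (gt_outcome M x) ord0 j -> j \in Zs M.
Proof.
move=> sub j; rewrite mxE => /existsP [x' /andP [/eqP e x'j]].
rewrite inE; apply/forallP => i; apply/negP => Mij.
have : gt_outcome M x' i by rewrite ffunE; apply/existsP; exists j; rewrite Mij.
rewrite e ffunE => /existsP [k /andP [Mik xk]].
by move: (sub k xk); rewrite inE => /forallP /(_ i); rewrite Mik.
Qed.
Definition Hn (t : R) := - t * ln t - (1 - t) * ln (1 - t).

Lemma ln_nonpos t : 0 < t -> t <= 1 -> ln t <= 0.
Proof. move=> t0 t1; have := ln_le_sub1 t0; lra. Qed.

Lemma ind_neg bb : ind (~~ bb) = 1 - ind bb.
Proof. by case: bb; rewrite /ind /= ?subrr ?subr0. Qed.

Lemma core n m (M : 'M[bool]_(m, n)) (b : R) :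
  0 < b < 1 ->
  (forall x x' : 'rV[bool]_n, (0 < weight x)%nat -> (0 < weight x')%nat ->
     gt_outcome M x = gt_outcome M x' -> (weight x')%:R <= (weight x)%:R / b) ->
  (forall k : nat, (0 < k)%nat -> k%:R <= b^-1 -> (1 - b ^+ 2) ^+ (n - k) <= b) ->
  n%:R * (Hn (b ^+ 2) - b * Hn b) <= m%:R * ln 2.
Proof.
move=> /andP [b0 b1] L1 Kh.
have a0 : 0 < b ^+ 2 by exact: exprn_gt0.
have a1 : b ^+ 2 < 1 by nra.
have lnb : ln b <= 0 by apply: ln_nonpos; lra.
have c0 : 0 <= - ln (1 - b).
  rewrite oppr_ge0; apply: ln_nonpos; rewrite ?RminusE ?R1E; lra.
have bn0 : b != 0 by rewrite gt_eqF.
pose Z := Zs M.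
pose S : R := (#|{ffun 'I_m -> bool}|)%:R.
have S2 : S = 2 ^+ m by rewrite /S card_ffun card_bool card_ord natrX.
have S0 : 0 < S by rewrite S2 exprn_gt0.
have lnS : ln S = m%:R * ln 2.
  by rewrite S2 -RpowE ln_pow ?INRE //; apply/RltP.
pose g (x : 'rV[bool]_n) := GU b (Uv M (gt_outcome M x)) x / S.
have gprop : forall x, 0 < g x /\ - ln (g x) = ln S +
     \sum_(j < n) (ind (x ord0 j) * (- ln b - - ln (1 - b)) +
                   (- ln (1 - b)) * ind (Uv M (gt_outcome M x) ord0 j)).
  move=> x; have [Gp GE] := @GU_ln n b (Uv M (gt_outcome M x)) x
            (introT andP (conj b0 b1)) (@Uv_sub m n M x).
  split; first by apply: divr_gt0.
  rewrite /g -RdivE /Rdiv ln_mult ?ln_Rinv; try by apply/RltP.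
    2: by apply/RltP; rewrite RinvE invr_gt0.
  rewrite RplusE !RoppE -GE; lra.
have gsum : \sum_x g x <= 1.
  have -> : 1 = \sum_(y : {ffun 'I_m -> bool}) \sum_(x : 'rV[bool]_n) GU b (Uv M y) x / S.
    under eq_bigr do rewrite -mulr_suml GU_sum mul1r.
    by rewrite sumr_const -mulr_natr mulVf // gt_eqF.
  rewrite exchange_big /=; apply: ler_sum => x _.
  rewrite (bigD1 (gt_outcome M x)) //= lerDl; apply: sumr_ge0 => y _.
  apply: divr_ge0; last exact: ltW.
  by apply: prodr_ge0 => j _; do 2 case: ifP => _ //; lra.
have ppos : forall x : 'rV[bool]_n, 0 < pB (b ^+ 2) x.
  by move=> x; apply: prodr_gt0 => j _; case: ifP => _ //; lra.
have G := @gibbs _ _ g ppos (fun x => proj1 (gprop x)) (pB_sum _ n) gsum.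
have LHS : \sum_(x : 'rV[bool]_n) pB (b ^+ 2) x * - ln (pB (b ^+ 2) x) = n%:R * Hn (b ^+ 2).
  have e : forall x : 'rV[bool]_n, - ln (pB (b ^+ 2) x) =
      \sum_(j < n) (if x ord0 j then - ln (b ^+ 2) else - ln (1 - b ^+ 2)).
    move=> x.
    have pp : forall j, 0 < (fun j => if x ord0 j then b ^+ 2 else 1 - b ^+ 2) j.
      by move=> j /=; case: ifP => _; lra.
    have [_ ->] := @ln_prod n (fun j => if x ord0 j then b ^+ 2 else 1 - b ^+ 2) pp.
    by rewrite -sumrN; apply: eq_bigr => j _; case: ifP.

  under eq_bigr do rewrite e.
  rewrite (E1 (b ^+ 2) (fun j (bb : bool) => if bb then - ln (b ^+ 2) else - ln (1 - b ^+ 2))) /=.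
  rewrite sumr_const card_ord -[in LHS]mulr_natl /Hn; ring.
pose z : R := (#|Z|)%:R.
have ub : forall x : 'rV[bool]_n,
    \sum_(j < n) ind (Uv M (gt_outcome M x) ord0 j) <=
    (\sum_(j < n) ind (x ord0 j && (j \notin Z))) / b +
    z * \prod_(j < n) (if x ord0 j && (j \notin Z) then 0 else 1).
  move=> x; case: (boolP [exists j, x ord0 j && (j \notin Z)]).
    case/existsP => j /andP [xj Zj].
    have -> : \prod_(j < n) (if x ord0 j && (j \notin Z) then 0 else 1) = 0 :> R.
      by rewrite (bigD1 j) //= xj Zj mul0r.
    rewrite mulr0 addr0.
    have hw1 : (0 < weight (xZ M x))%nat.
      by apply/card_gt0P; exists j; rewrite inE mxE xj Zj.
    have hw2 : (0 < weight (Uv M (gt_outcome M x)))%nat.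
      by apply/card_gt0P; exists j; rewrite inE (Uv_sub M xj).
    have eo : gt_outcome M (xZ M x) = gt_outcome M (Uv M (gt_outcome M x)).
      by rewrite out_xZ Uv_out.
    have := L1 _ _ hw1 hw2 eo.
    rewrite !weightR.
    have -> : \sum_(j < n) ind (xZ M x ord0 j) = \sum_(j < n) ind (x ord0 j && (j \notin Z)).
      by apply: eq_bigr => k _; rewrite mxE.
    done.
  rewrite negb_exists => /forallP H.
  have -> : \prod_(j < n) (if x ord0 j && (j \notin Z) then 0 else 1) = 1 :> R.
    by apply: big1 => k _; rewrite (negbTE (H k)).
  rewrite mulr1.
  have xsub : forall k, x ord0 k -> k \in Zs M.
    by move=> k xk; move: (H k); rewrite xk /= negbK.
  apply: (@le_trans _ _ z).
    rewrite /z cardR; apply: ler_sum => k _; rewrite /ind; case: ifP => Uk; last by case: ifP => _; lra.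
    by rewrite (Uv_Z xsub Uk).
  rewrite lerDr; apply: divr_ge0; last exact: ltW.
  by apply: sumr_ge0 => k _; rewrite /ind; case: ifP => _; lra.
pose phi2 := fun (j : 'I_n) (bb : bool) =>
  ind bb * (- ln b - - ln (1 - b)) + - ln (1 - b) / b * ind (bb && (j \notin Z)).
pose H2 := fun (j : 'I_n) (bb : bool) => if bb && (j \notin Z) then @GRing.zero R else @GRing.one R.
have bound : forall x : 'rV[bool]_n, - ln (g x) <=
    ln S + \sum_(j < n) phi2 j (x ord0 j) +
    (- ln (1 - b) * z) * \prod_(j < n) H2 j (x ord0 j).
  move=> x; rewrite (proj2 (gprop x)) big_split /= -mulr_sumr.
  rewrite /phi2 big_split /= -mulr_sumr.
  have := ub x; rewrite /H2.
  set u := \sum_(j < n) ind _.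
  set s2 := \sum_(j < n) ind (_ && _).
  set P := \prod_(j < n) _.
  set s1 := \sum_(j < n) (ind _ * _).
  set c := - ln (1 - b).
  move=> hu.
  have hc : c * u <= c * (s2 / b + z * P) := ler_wpM2l c0 hu.
  have e : c * (s2 / b + z * P) = c / b * s2 + c * z * P by ring.
  rewrite e in hc; lra.
have RHS : \sum_x pB (b ^+ 2) x * - ln (g x) <=
    ln S + \sum_(j < n) (b ^+ 2 * phi2 j true + (1 - b ^+ 2) * phi2 j false) +
    (- ln (1 - b) * z) * \prod_(j < n) (b ^+ 2 * H2 j true + (1 - b ^+ 2) * H2 j false).
  apply: (@le_trans _ _ (\sum_x pB (b ^+ 2) x * (ln S + \sum_(j < n) phi2 j (x ord0 j) +
    (- ln (1 - b) * z) * \prod_(j < n) H2 j (x ord0 j)))).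
    by apply: ler_sum => x _; apply: ler_wpM2l; [exact: ltW (ppos x) | exact: bound x].
  under eq_bigr do rewrite mulrDr mulrDr.
  rewrite big_split big_split /= -mulr_suml pB_sum mul1r.
  rewrite (E1 (b ^+ 2) phi2).
  under eq_bigr do rewrite mulrCA.
  by rewrite -mulr_sumr (E2 (b ^+ 2) H2).
have S1 : \sum_(j < n) (b ^+ 2 * phi2 j true + (1 - b ^+ 2) * phi2 j false) =
    n%:R * b ^+ 2 * (- ln b - - ln (1 - b)) + - ln (1 - b) * b * (n%:R - z).
  have e : forall j, b ^+ 2 * phi2 j true + (1 - b ^+ 2) * phi2 j false =
      b ^+ 2 * (- ln b - - ln (1 - b)) + - ln (1 - b) * b * (1 - ind (j \in Z)).
    move=> j; rewrite /phi2 /= ind_neg; set t := ind (j \in Z); rewrite /ind /=.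
    set c := - ln (1 - b); set L := - ln b.
    by field.
  under eq_bigr do rewrite e.
  rewrite big_split /= sumr_const card_ord -mulr_sumr sumrB sumr_const card_ord -cardR -/z.
  by rewrite -[_ *+ n]mulr_natl mulrA.
have cZ : #|~: Z| = (n - #|Z|)%nat.
  have e := cardsC Z; rewrite card_ord in e.
  by rewrite -[X in (X - _)%nat]e addKn.
have P0e : \prod_(j < n) (b ^+ 2 * H2 j true + (1 - b ^+ 2) * H2 j false) =
    (1 - b ^+ 2) ^+ (n - #|Z|).
  have e : forall j, b ^+ 2 * H2 j true + (1 - b ^+ 2) * H2 j false =
      if j \in ~: Z then 1 - b ^+ 2 else 1.
    by move=> j; rewrite /H2 in_setC /=; case: (j \in Z) => /=; ring.
  under eq_bigr do rewrite e.
  by rewrite -big_mkcond prodr_const cZ.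
have zb : (0 < #|Z|)%nat -> z <= b^-1.
  move=> /card_gt0P [j jZ].
  pose e1 : 'rV[bool]_n := \row_k (k == j).
  pose oZ : 'rV[bool]_n := \row_k (k \in Z).
  have w1 : weight e1 = 1%nat.
    rewrite /weight (_ : [set k | e1 ord0 k] = [set j]) ?cards1 //.
    by apply/setP => k; rewrite !inE mxE.
  have w2 : weight oZ = #|Z|.
    rewrite /weight (_ : [set k | oZ ord0 k] = Z) //.
    by apply/setP => k; rewrite inE mxE.
  have eo : gt_outcome M e1 = gt_outcome M oZ.
    apply/ffunP => i; rewrite !ffunE.
    have zero : forall k, k \in Z -> M i k = false.
      by move=> k; rewrite inE => /forallP /(_ i) /negbTE.
    rewrite (_ : [exists k, M i k && e1 ord0 k] = false); last first.
      apply/negbTE/existsP => -[k]; rewrite mxE => /andP [Mik /eqP ekj].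
      by move: Mik; rewrite ekj zero.
    symmetry; apply/negbTE/existsP => -[k]; rewrite mxE => /andP [Mik kZ].
    by move: Mik; rewrite zero.
  have h1 : (0 < weight e1)%nat by rewrite w1.
  have h2 : (0 < weight oZ)%nat by rewrite w2; apply/card_gt0P; exists j.
  by have := L1 _ _ h1 h2 eo; rewrite w1 w2 div1r.
have key : 0 <= - ln (1 - b) * z * (b - (1 - b ^+ 2) ^+ (n - #|Z|)).
  case: (posnP #|Z|) => [Z0 | Zp].
    by rewrite /z Z0 mulr0 mul0r.
  apply: mulr_ge0; first by apply: mulr_ge0 => //; exact: ler0n.
  by rewrite subr_ge0; apply: Kh => //; exact: zb.
rewrite LHS in G.
have main := le_trans G RHS.
rewrite S1 P0e in main.
rewrite -lnS.
have HB : Hn b = b * - ln b + (1 - b) * - ln (1 - b) by rewrite /Hn; ring.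
rewrite HB.
move: main key.
set L := - ln b. set c := - ln (1 - b). set P0 := _ ^+ (n - #|Z|). set Ha := Hn _.
set N := n%:R.
move=> main key.
have id : ln S + N * b ^+ 2 * (L - c) + c * b * (N - z) + c * z * P0 =
   ln S + N * b * (b * L + (1 - b) * c) - c * z * (b - P0) by ring.
have id2 : N * (Ha - b * (b * L + (1 - b) * c)) = N * Ha - N * b * (b * L + (1 - b) * c) by ring.
rewrite id2; lra.
Qed.

Lemma L1_from (Delta : R) m n (M : 'M[bool]_(m, n)) : 1 < Delta ->
  approx_usable Delta M ->
  forall x x' : 'rV[bool]_n, (0 < weight x)%nat -> (0 < weight x')%nat ->
     gt_outcome M x = gt_outcome M x' -> (weight x')%:R <= (weight x)%:R / (1 / Delta ^+ 2).
Proof.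
move=> D1 [dec Hd] x x' w1 w2 eo.
have [h1 h2] := Hd x w1; have [h3 h4] := Hd x' w2.
rewrite -eo in h3 h4.
move: h1 h2 h3 h4; set d := dec _.
rewrite !RealsE => /RleP h1 /RleP h2 /RleP h3 /RleP h4.
have W : 0 < (weight x)%:R :> R by rewrite ltr0n.
have W' : 0 < (weight x')%:R :> R by rewrite ltr0n.
have D0 : 0 < Delta by lra.
rewrite ler_pdivlMr // in h3; rewrite ler_pdivrMr // in h2.
rewrite invf_div divr1.
have : (weight x')%:R / Delta <= Delta * (weight x)%:R by rewrite mulrC; lra.
rewrite ler_pdivrMr // => h.
by rewrite expr2; nra.
Qed.
Lemma final_conv (Delta : R) (n m : nat) : 1 < Delta ->
  n%:R * (Hn ((1 / Delta ^+ 2) ^+ 2) - (1 / Delta ^+ 2) * Hn (1 / Delta ^+ 2)) <= m%:R * ln 2 ->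
  Rle (Rmult (INR n) (Rminus (h (Rdiv (IZR 1%Z) (pow Delta 4))) (Rmult (Rdiv (IZR 1%Z) (pow Delta 2)) (h (Rdiv (IZR 1%Z) (pow Delta 2)))))) (INR m).
Proof.
move=> D1 H.
have l2 : 0 < ln 2.
  have h := ln_increasing 1 2 Rlt_0_1 (Rlt_n_Sn 1); rewrite ln_1 in h; exact/RltP.
have hH : forall t, h t = Hn t / ln 2.
  move=> t; rewrite /h /log2 /Hn !RealsE; field; rewrite gt_eqF //.
have e4 : Rdiv (IZR 1%Z) (pow Delta 4) = (1 / Delta ^+ 2) ^+ 2.
  have D0 : Delta != 0 by rewrite gt_eqF //; lra.
  rewrite !RealsE; field; rewrite ?expf_neq0 //.
apply/RleP; rewrite e4 !RealsE !hH.
move: H; set a := Hn _; set c := Hn _; set bb := 1 / _.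
move=> H.
have -> : n%:R * (a / ln 2 - bb * (c / ln 2)) = (n%:R * (a - bb * c)) / ln 2.
  field; rewrite gt_eqF //.
by rewrite ler_pdivrMr.
Qed.

Lemma main_ring (Delta : R) : 1 < Delta -> exists N : nat, forall (n m : nat), (N <= n)%nat ->
  forall M : 'M[bool]_(m, n), approx_usable Delta M ->
  n%:R * (Hn ((1 / Delta ^+ 2) ^+ 2) - (1 / Delta ^+ 2) * Hn (1 / Delta ^+ 2)) <= m%:R * ln 2.
Proof.
move=> D1.
have D0 : 0 < Delta by lra.
have b0 : 0 < 1 / Delta ^+ 2 by rewrite divr_gt0 // exprn_gt0.
have b1 : 1 / Delta ^+ 2 < 1.
  rewrite ltr_pdivrMr ?exprn_gt0 // mul1r expr2.
  by rewrite -[1]mulr1; apply: ltr_pM.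
move: b0 b1; set b := 1 / Delta ^+ 2 => b0 b1.
have [K HK] : exists K : nat, forall k, (k >= K)%coq_nat -> Rlt (Rabs ((1 - b ^+ 2) ^ k)) b.
  have b2 : 0 < b ^+ 2 by exact: exprn_gt0.
  have b21 : b ^+ 2 < 1 by rewrite expr2 -[1]mulr1; apply: ltr_pM => //; exact: ltW.
  apply: pow_lt_1_zero; apply/RltP; last exact: b0.
  rewrite !RealsE ger0_norm; lra.
pose D := (Num.Def.truncn (b^-1)).+1.
have HD : b^-1 < D%:R by exact: truncnS_gt.
exists (K + D)%nat => n m hn M HM.
apply: core.
- by apply/andP.
- exact: L1_from D1 HM.
move=> k k0 kb.
have kD : (k < D)%nat by rewrite -(ltr_nat R); exact: le_lt_trans kb HD.
have hK : (K <= n - k)%nat.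
  rewrite leq_subRL; last by apply: leq_trans (ltnW kD) (leq_trans (leq_addl K D) hn).
  by apply: leq_trans hn; rewrite addnC leq_add2l ltnW.
have := HK _ (elimT ssrnat.leP hK); move/RltP; rewrite !RealsE => h.
exact: le_trans (ler_norm _) (ltW h).
Qed.

Local Close Scope ring_scope.
Local Open Scope R_scope.

Theorem corollary1 (Delta : R) : 1 < Delta ->
  exists N : nat, forall (n m : nat), (N <= n)%nat ->
    forall M : 'M[bool]_(m, n), approx_usable Delta M ->
      INR n * (h (1 / Delta ^ 4) - 1 / Delta ^ 2 * h (1 / Delta ^ 2)) <= INR m.
Proof.
move=> D1.
have [N HN] := main_ring (introT RltP D1).
exists N => n m hn M HM.
exact: final_conv (introT RltP D1) (HN n m hn M HM).
Qed.
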